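(* Let $f$ be an arithmetical function and let $g(n)=\sum_{d\mid n} f(d)$ for $n\ge 1$. Then for every integer $n\ge 1$, \[ \sum_{k=1}^{n} g(k)\,\omega(n-k)=\sum_{\substack{m+k=n\\ m\ge 1,\ k\ge 0}} f(m)\,\Omega_m(k). \]
   Context: $\omega:\mathbb{Z}\to\mathbb{Z}$ is defined by $\omega(0)=1$; $\omega(m)=(-1)^j$ if $m=\frac{3j^2+j}{2}$ or $m=\frac{3j^2-j}{2}$ for some integer $j\ge 1$; and $\omega(m)=0$ otherwise (in particular $\omega(m)=0$ for $m<0$). Thus $\prod_{n\ge1}(1-q^n)=\sum_{m\ge0}\omega(m)q^m$ (Euler's pentagonal number theorem). For integers $m\ge 1$ and $k$, $\Omega_m(k)=\sum_{j\ge 0}\omega(k-jm)=\omega(k)+\omega(k-m)+\omega(k-2m)+\cdots$ (a finite sum). *)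

(* Defs.v *)
From mathcomp Require Import all_boot all_order all_algebra.
Set Implicit Arguments. Unset Strict Implicit. Unset Printing Implicit Defensive.
Import Order.TTheory GRing.Theory Num.Theory.
Local Open Scope ring_scope.

(* Pentagonal-number coefficient omega : Z -> Z.
   omega 0 = 1; omega m = (-1)^j if m = (3j^2+j)/2 or m = (3j^2-j)/2 for some
   integer j >= 1; omega m = 0 otherwise (in particular for m < 0).
   For m > 0 any such j satisfies j <= m, so searching j in 1..m suffices.
   The two families of generalized pentagonal numbers are disjoint for j >= 1,
   and j is unique, so the value is well defined. *)
Definition is_pent (m : int) (j : nat) : bool :=
  (0 < j)%N && ((2 * m == (3 * (j:int)^+2 + (j:int))) || (2 * m == (3 * (j:int)^+2 - (j:int)))).

Definition omega (m : int) : int :=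
  if m == 0 then 1
  else if m < 0 then 0
  else let js := [seq j <- iota 1 `|m|%N | is_pent m j] in
       if js is j :: _ then (-1) ^+ j else 0.

(* Omega_m(k) = sum_{j >= 0} omega(k - j m); terms with j > |k| have negative
   argument (for m >= 1), hence vanish. *)
Definition Omega (m : nat) (k : int) : int :=
  \sum_(j < (`|k|%N).+1) omega (k - (j * m)%N%:Z).

(* Main.v *)
Require Import Defs.
From mathcomp Require Import all_boot all_order all_algebra.
From mathcomp Require Import zify.
Import Order.TTheory GRing.Theory Num.Theory.
Local Open Scope ring_scope.

Lemma omega_neg (z : int) : z < 0 -> omega z = 0.
Proof. move=> hz; rewrite /omega hz; case: eqP => // E; by rewrite E in hz. Qed.

Lemma divsum (R : comRingType) (F : nat -> R) (n k : nat) :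
  (1 <= k)%N -> (k <= n)%N ->
  \sum_(d <- divisors k) F d = \sum_(1 <= d < n.+1 | (d %| k)%N) F d.
Proof.
move=> k1 kn; rewrite -[RHS]big_filter; apply: perm_big.
apply: uniq_perm; first exact: divisors_uniq.
  by rewrite filter_uniq // iota_uniq.
move=> d; rewrite mem_filter mem_index_iota -dvdn_divisors //.
case dk: (d %| k)%N => //=.
have := dvdn_leq k1 dk; have : (0 < d)%N.
  by case: d dk => //; rewrite dvd0n => /eqP E; rewrite E in k1.
lia.
Qed.

Lemma indic (R : comRingType) (X : R) (n d k : nat) :
  (1 <= k)%N -> (k <= n)%N -> (1 <= d)%N ->
  (if (d %| k)%N then X else 0) = \sum_(0 <= j < n) (if k == (j.+1 * d)%N then X else 0).
Proof.
move=> k1 kn d1; rewrite -big_mkcond /=.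
case dk: (d %| k)%N.
  case/dvdnP: dk => q Eq; subst k.
  rewrite (eq_bigl (fun j => j == q.-1)); last first.
    move=> j /=; rewrite eqn_pmul2r //. 
    have : (0 < q)%N by case: q k1 kn => //.
    lia.
  rewrite big_nat1_eq ifT //.
  have : (q <= q * d)%N by rewrite leq_pmulr.
  have : (0 < q)%N by case: q k1 kn => //.
  lia.
rewrite big1 // => j /eqP E; move: dk; by rewrite E dvdn_mull.
Qed.

Theorem theorem1 (R : comRingType) (f : nat -> R) (n : nat) :
  (1 <= n)%N ->
  let g := fun k : nat => \sum_(d <- divisors k) f d in
  \sum_(1 <= k < n.+1) g k * (omega (n%:Z - k%:Z))%:~R =
  \sum_(1 <= m < n.+1) f m * (Omega m (n - m)%N%:Z)%:~R.
Proof.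
move=> n1 g.
pose W (k : nat) : R := (omega (n%:Z - k%:Z))%:~R.
transitivity (\sum_(1 <= k < n.+1) \sum_(1 <= d < n.+1)
     (if (d %| k)%N then f d * W k else 0)).
  rewrite !big_nat; apply: eq_bigr => k /andP [k1 kn].
  rewrite /g (@divsum _ f n k) // big_distrl /= big_mkcond /= big_nat.
  by apply: eq_bigr.
rewrite exchange_big /=.
rewrite !big_nat; apply: eq_bigr => d /andP [d1 dn].
transitivity (f d * \sum_(1 <= k < n.+1) \sum_(0 <= j < n)
     (if k == (j.+1 * d)%N then W k else 0)).
  rewrite big_distrr /= !big_nat; apply: eq_bigr => k /andP [k1 kn].
  rewrite -(@indic _ _ n d k) //; by case: (d %| k)%N; rewrite ?mulr0.
congr (_ * _).
rewrite exchange_big /=.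
rewrite (eq_bigr (fun j => W (j.+1 * d)%N)); last first.
  move=> j _; rewrite -big_mkcond big_nat1_eq.
  case: ifP => // H; rewrite /W omega_neg //.
  have : (0 < j.+1 * d)%N by rewrite muln_gt0.
  move: H; lia.
rewrite /Omega absz_nat rmorph_sum /= big_mkord.
rewrite (big_ord_widen n (fun j => (omega ((n - d)%N%:Z - (j * d)%N%:Z))%:~R)); last by lia.
rewrite [RHS]big_mkcond /=.
apply: eq_bigr => j _.
case: ifP => H.
  rewrite /W; congr (_%:~R); congr omega; lia.
rewrite /W omega_neg //.
have := ltn_ord j. rewrite /=. move: H; nia.
Qed.
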